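(* Let $(X,d_X)$ and $(Y,d_Y)$ be geodesic spaces with monotone moduli of weak uniform convexity $\eta_X$ and $\eta_Y$, respectively. Let $\theta\in X$, $\tau\in Y$ and let $Z=X\sqcup_\theta Y$ be the gluing of $X$ and $Y$ obtained by identifying $\theta$ and $\tau$. Then $Z$ is weakly uniformly convex, with modulus of weak uniform convexity \[\eta(a,r,\varepsilon)=\begin{cases}\min\{\eta_X(a,r,\varepsilon),\ \eta_Y(\tau,r,\varepsilon)\varepsilon/2,\ \varepsilon/4,\ \eta_X(a,r,\varepsilon/4)\}, & a\in X,\\ \min\{\eta_Y(a,r,\varepsilon),\ \eta_X(\theta,r,\varepsilon)\varepsilon/2,\ \varepsilon/4,\ \eta_Y(a,r,\varepsilon/4)\}, & a\in Y.\end{cases}\]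
   Context: For a geodesic space $W$ (metric space in which any two points are joined by a distance-preserving path from an interval, whose image is a geodesic segment), a modulus of weak uniform convexity is a map $\eta:W\times(0,\infty)\times(0,2]\to(0,1]$ such that for all $a\in W$, $r>0$, $\varepsilon\in(0,2]$, all $x,y\in W$ and every geodesic segment $[x,y]$ with midpoint $m(x,y)$: if $d(a,x)\le r$, $d(a,y)\le r$ and $d(x,y)\ge\varepsilon r$, then $d(a,m(x,y))\le(1-\eta(a,r,\varepsilon))r$. $W$ is weakly uniformly convex if it admits such a modulus. A modulus is monotone if it is nonincreasing in its second argument. The gluing $X\sqcup_\theta Y$ is the quotient of the disjoint union $X\sqcup Y$ by the identification $\theta\sim\tau$, with $X$ and $Y$ identified with their images, equipped with the metric $d(x,y)=d_X(x,y)$ if $x,y\in X$, $d(x,y)=d_Y(x,y)$ if $x,y\in Y$, and $d(x,y)=d_X(x,\theta)+d_Y(\tau,y)$ if $x\in X$, $y\in Y$. *)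

(* Defs.v *)
From Stdlib Require Import Reals Lra.
Open Scope R_scope.

Definition metric_space {T : Type} (d : T -> T -> R) : Prop :=
  (forall x y, 0 <= d x y) /\
  (forall x y, d x y = 0 <-> x = y) /\
  (forall x y, d x y = d y x) /\
  (forall x y z, d x z <= d x y + d y z).

(* Its image is
   a geodesic segment [x,y], whose midpoint is gam (d x y / 2). *)
Definition geodesic {T : Type} (d : T -> T -> R) (gam : R -> T) (x y : T) : Prop :=
  gam 0 = x /\ gam (d x y) = y /\
  (forall s t, 0 <= s <= d x y -> 0 <= t <= d x y ->
     d (gam s) (gam t) = Rabs (s - t)).

Definition geodesic_space {T : Type} (d : T -> T -> R) : Prop :=
  metric_space d /\ forall x y : T, exists gam : R -> T, geodesic d gam x y.

Definition modulus_wuc {T : Type} (d : T -> T -> R) (eta : T -> R -> R -> R) : Prop :=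
  (forall a r eps, 0 < r -> 0 < eps <= 2 -> 0 < eta a r eps <= 1) /\
  (forall a r eps x y gam, 0 < r -> 0 < eps <= 2 ->
     geodesic d gam x y ->
     d a x <= r -> d a y <= r -> eps * r <= d x y ->
     d a (gam (d x y / 2)) <= (1 - eta a r eps) * r).

Definition monotone_modulus {T : Type} (eta : T -> R -> R -> R) : Prop :=
  forall a r s eps, 0 < r -> r <= s -> 0 < eps <= 2 -> eta a s eps <= eta a r eps.

(* The gluing X ⊔_θ Y: the quotient of X + Y by inl θ ~ inr τ, modelled by
   its canonical set of representatives {z : X + Y | z <> inr τ}
   (the glued point is represented by inl θ). *)
Definition glue (X Y : Type) (tau : Y) : Type := {z : X + Y | z <> inr tau}.

Definition sum_dist {X Y : Type} (dX : X -> X -> R) (dY : Y -> Y -> R)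
  (theta : X) (tau : Y) (u v : X + Y) : R :=
  match u, v with
  | inl x, inl x' => dX x x'
  | inr y, inr y' => dY y y'
  | inl x, inr y => dX x theta + dY tau y
  | inr y, inl x => dX x theta + dY tau y
  end.

Definition glue_dist {X Y : Type} (dX : X -> X -> R) (dY : Y -> Y -> R)
  (theta : X) (tau : Y) (z w : glue X Y tau) : R :=
  sum_dist dX dY theta tau (proj1_sig z) (proj1_sig w).

(* The modulus of the statement; points of X (including the glued point)
   use the first formula, points of Y \ {τ} the second. *)
Definition glue_eta {X Y : Type} (etaX : X -> R -> R -> R) (etaY : Y -> R -> R -> R)
  (theta : X) (tau : Y) (a : glue X Y tau) (r eps : R) : R :=
  match proj1_sig a with
  | inl x => Rmin (Rmin (etaX x r eps) (etaY tau r eps * eps / 2))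
                  (Rmin (eps / 4) (etaX x r (eps / 4)))
  | inr y => Rmin (Rmin (etaY y r eps) (etaX theta r eps * eps / 2))
                  (Rmin (eps / 4) (etaY y r (eps / 4)))
  end.

(* Main.v *)
Require Import Defs.
From Stdlib Require Import Reals Lra Classical ClassicalEpsilon ProofIrrelevance.
Open Scope R_scope.

Lemma ms_pos {T} (d : T -> T -> R) : metric_space d -> forall x y, 0 <= d x y.
Proof. intros [H _]; exact H. Qed.
Lemma ms_refl {T} (d : T -> T -> R) : metric_space d -> forall x, d x x = 0.
Proof. intros [_ [H _]] x; apply H; reflexivity. Qed.
Lemma ms_eq0 {T} (d : T -> T -> R) : metric_space d -> forall x y, d x y = 0 -> x = y.
Proof. intros [_ [H _]] x y; apply H. Qed.
Lemma ms_sym {T} (d : T -> T -> R) : metric_space d -> forall x y, d x y = d y x.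
Proof. intros [_ [_ [H _]]]; exact H. Qed.
Lemma ms_tri {T} (d : T -> T -> R) : metric_space d -> forall x y z, d x z <= d x y + d y z.
Proof. intros [_ [_ [_ H]]]; exact H. Qed.

Lemma geo_sub {T} (d : T -> T -> R) g u v s1 s2 :
  geodesic d g u v -> 0 <= s1 -> s1 <= s2 -> s2 <= d u v ->
  d (g s1) (g s2) = s2 - s1 /\ geodesic d (fun t => g (s1 + t)) (g s1) (g s2).
Proof.
  intros [H0 [H1 H2]] h1 h2 h3.
  assert (e : d (g s1) (g s2) = s2 - s1).
  { rewrite H2 by lra. rewrite Rabs_minus_sym. apply Rabs_right; lra. }
  split; [exact e|]. split; [|split].
  - rewrite Rplus_0_r; reflexivity.
  - rewrite e. f_equal. ring.
  - intros s t Hs Ht. rewrite e in Hs, Ht. rewrite H2 by lra. f_equal. ring.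
Qed.

Lemma geo_rev {T} (d : T -> T -> R) g u v :
  metric_space d -> geodesic d g u v -> geodesic d (fun t => g (d u v - t)) v u.
Proof.
  intros Hm [H0 [H1 H2]]. unfold geodesic; cbv beta. rewrite (ms_sym d Hm v u). split; [|split].
  - rewrite Rminus_0_r; exact H1.
  - rewrite Rminus_diag; exact H0.
  - intros s t Hs Ht. rewrite H2 by lra. rewrite Rabs_minus_sym. f_equal. ring.
Qed.

Definition clamp (L t : R) : R := Rmax 0 (Rmin t L).

Lemma clamp_lip L s t : Rabs (clamp L s - clamp L t) <= Rabs (s - t).
Proof.
  unfold clamp, Rmax, Rmin; repeat destruct Rle_dec; unfold Rabs;
  repeat destruct Rcase_abs; lra.
Qed.
Lemma clamp_in L t : 0 <= L -> 0 <= clamp L t <= L.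
Proof. intros; unfold clamp, Rmax, Rmin; repeat destruct Rle_dec; lra. Qed.
Lemma clamp_id L t : 0 <= t <= L -> clamp L t = t.
Proof. intros; unfold clamp, Rmax, Rmin; repeat destruct Rle_dec; lra. Qed.

Lemma lip_cont (h : R -> R) :
  (forall s t, Rabs (h s - h t) <= Rabs (s - t)) -> forall x, continuity_pt h x.
Proof.
  intros H x eps Heps. exists eps. split; [lra|].
  intros y [_ Hy]. simpl in *. unfold R_dist in *.
  eapply Rle_lt_trans; [apply H|]. exact Hy.
Qed.

Lemma mod_pos {T} (d : T -> T -> R) eta a r eps :
  modulus_wuc d eta -> 0 < r -> 0 < eps <= 2 -> 0 < eta a r eps <= 1.
Proof. intros [H _]; apply H. Qed.

Lemma ball_convex {T} (d : T -> T -> R) eta g u v a R0 :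
  metric_space d -> modulus_wuc d eta -> geodesic d g u v ->
  d a u <= R0 -> d a v <= R0 -> forall t, 0 <= t <= d u v -> d a (g t) <= R0.
Proof.
  intros Hm Hmod Hg Hu Hv t Ht.
  set (L := d u v) in *.
  assert (HL : 0 <= L) by apply (ms_pos d Hm).
  set (h := fun s => d a (g (clamp L s))).
  assert (Hh : forall s, 0 <= s <= L -> h s = d a (g s)).
  { intros s Hs; unfold h; rewrite clamp_id by exact Hs; reflexivity. }
  assert (Hlip : forall s1 s2, Rabs (h s1 - h s2) <= Rabs (s1 - s2)).
  { intros s1 s2. unfold h.
    pose proof (clamp_in L s1 HL). pose proof (clamp_in L s2 HL).
    destruct Hg as [_ [_ Hd]].
    pose proof (Hd (clamp L s1) (clamp L s2) H H0) as E.
    pose proof (ms_tri d Hm a (g (clamp L s1)) (g (clamp L s2))).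
    pose proof (ms_tri d Hm a (g (clamp L s2)) (g (clamp L s1))).
    rewrite (ms_sym d Hm (g (clamp L s2)) (g (clamp L s1))) in H2.
    pose proof (clamp_lip L s1 s2).
    apply Rabs_le. lra. }
  destruct (continuity_ab_maj h 0 L HL (fun c _ => lip_cont h Hlip c)) as [Mx [HM HMx]].
  destruct (Rle_dec (h Mx) R0) as [Hle|Hgt].
  { rewrite <- Hh by exact Ht. pose proof (HM t Ht). lra. }
  exfalso. apply Rnot_le_lt in Hgt.
  set (M := h Mx) in *.
  destruct Hg as [G0 [G1 Gd]]. fold L in G1, Gd.
  assert (h0 : h 0 = d a u) by (rewrite Hh by lra; rewrite G0; reflexivity).
  assert (hL : h L = d a v) by (rewrite Hh by lra; rewrite G1; reflexivity).
  assert (Mx <> 0) by (intro E; subst M; rewrite E in Hgt; lra).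
  assert (Mx <> L) by (intro E; subst M; rewrite E in Hgt; lra).
  set (dl := Rmin Mx (L - Mx)).
  assert (Hdl : 0 < dl /\ dl <= Mx /\ dl <= L - Mx).
  { unfold dl, Rmin; destruct Rle_dec; lra. }
  destruct (geo_sub d g u v (Mx - dl) (Mx + dl) (conj G0 (conj G1 Gd))) as [E Hg'];
    try (fold L; lra).
  assert (A1 : d a (g (Mx - dl)) <= M).
  { rewrite <- Hh by lra. apply HM; lra. }
  assert (A2 : d a (g (Mx + dl)) <= M).
  { rewrite <- Hh by lra. apply HM; lra. }
  assert (HM0 : 0 < M) by (pose proof (ms_pos d Hm a u); lra).
  pose proof (ms_tri d Hm (g (Mx - dl)) a (g (Mx + dl))) as T1.
  rewrite (ms_sym d Hm (g (Mx - dl)) a) in T1.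
  set (e := 2 * dl / M).
  assert (he : e * M = 2 * dl) by (unfold e; field; lra).
  assert (He : 0 < e <= 2) by (split; nra).
  destruct Hmod as [Hpos Hmid].
  pose proof (Hmid a M e _ _ _ HM0 He Hg' A1 A2) as K.
  rewrite E in K.
  replace (Mx - dl + (Mx + dl - (Mx - dl)) / 2) with Mx in K by field.
  specialize (K ltac:(lra)).
  pose proof (Hpos a M e HM0 He).
  assert (h Mx = d a (g Mx)) by (apply Hh; lra).
  subst M. nra.
Qed.

Lemma inl_ne {X Y} (tau : Y) (x : X) : (inl x : X + Y) <> inr tau.
Proof. discriminate. Qed.
Lemma inr_ne {X Y} (tau y : Y) : y <> tau -> (inr y : X + Y) <> inr tau.
Proof. intros H E; injection E; auto. Qed.

Definition embX {X Y} (tau : Y) (x : X) : glue X Y tau :=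
  exist _ (inl x) (inl_ne tau x).
Definition embY {X Y} (theta : X) (tau : Y) (y : Y) : glue X Y tau :=
  match excluded_middle_informative (y = tau) with
  | left _ => embX tau theta
  | right H => exist _ (inr y) (inr_ne tau y H)
  end.
Definition pX {X Y} (theta : X) (tau : Y) (z : glue X Y tau) : X :=
  match proj1_sig z with inl x => x | inr _ => theta end.
Definition pY {X Y} (tau : Y) (z : glue X Y tau) : Y :=
  match proj1_sig z with inl _ => tau | inr y => y end.

Lemma pX_embX {X Y} theta (tau : Y) (x : X) : pX theta tau (embX tau x) = x.
Proof. reflexivity. Qed.
Lemma embY_tau {X Y} (theta : X) (tau : Y) : embY theta tau tau = embX tau theta.
Proof. unfold embY; destruct excluded_middle_informative; congruence. Qed.
Lemma pY_embY {X Y} (theta : X) (tau : Y) y : pY tau (embY theta tau y) = y.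
Proof. unfold embY; destruct excluded_middle_informative; subst; reflexivity. Qed.

Lemma glue_dec {X Y} (theta : X) (tau : Y) (z : glue X Y tau) :
  (exists x, z = embX tau x) \/ (exists y, y <> tau /\ z = embY theta tau y).
Proof.
  destruct z as [[x|y] p].
  - left; exists x. unfold embX. f_equal. apply proof_irrelevance.
  - right; exists y. assert (H : y <> tau) by (intro E; subst; apply p; reflexivity).
    split; [exact H|]. unfold embY; destruct excluded_middle_informative; [contradiction|].
    f_equal; apply proof_irrelevance.
Qed.


Lemma dXX {X Y} dX dY (theta : X) (tau : Y) x x' :
  glue_dist dX dY theta tau (embX tau x) (embX tau x') = dX x x'.
Proof. reflexivity. Qed.

Lemma dXY {X Y} dX dY (theta : X) (tau : Y) x y :
  metric_space dY ->
  glue_dist dX dY theta tau (embX tau x) (embY theta tau y) = dX x theta + dY tau y.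
Proof.
  intros Hy. unfold embY; destruct excluded_middle_informative.
  - subst. rewrite dXX, (ms_refl dY Hy). ring.
  - reflexivity.
Qed.

Lemma dYX {X Y} dX dY (theta : X) (tau : Y) x y :
  metric_space dX -> metric_space dY ->
  glue_dist dX dY theta tau (embY theta tau y) (embX tau x) = dX x theta + dY tau y.
Proof.
  intros Hx Hy. unfold embY; destruct excluded_middle_informative.
  - subst. rewrite dXX, (ms_refl dY Hy), (ms_sym dX Hx). ring.
  - reflexivity.
Qed.

Lemma dYY {X Y} dX dY (theta : X) (tau : Y) y y' :
  metric_space dX -> metric_space dY ->
  glue_dist dX dY theta tau (embY theta tau y) (embY theta tau y') = dY y y'.
Proof.
  intros Hx Hy. unfold embY;
  destruct (excluded_middle_informative (y = tau));
  destruct (excluded_middle_informative (y' = tau)); subst.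
  - rewrite dXX, (ms_refl dX Hx), (ms_refl dY Hy); reflexivity.
  - unfold glue_dist; simpl. rewrite (ms_refl dX Hx). ring.
  - unfold glue_dist; simpl. rewrite (ms_refl dX Hx), (ms_sym dY Hy). ring.
  - reflexivity.
Qed.

Lemma dY_pos {Y} (dY : Y -> Y -> R) tau y : metric_space dY -> y <> tau -> 0 < dY tau y.
Proof.
  intros Hy H. pose proof (ms_pos dY Hy tau y). destruct (Rle_lt_or_eq_dec _ _ H0); auto.
  exfalso; apply H; symmetry; apply (ms_eq0 dY Hy); auto.
Qed.

Ltac gdec th z :=
  let x := fresh "x" in let y := fresh "y" in let Hn := fresh "Hn" in
  destruct (glue_dec th _ z) as [[x ->]|[y [Hn ->]]].

Ltac grw Hx Hy := repeat first
  [ rewrite dXX | rewrite (dXY _ _ _ _ _ _ Hy) | rewrite (dYX _ _ _ _ _ _ Hx Hy)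
  | rewrite (dYY _ _ _ _ _ _ Hx Hy) ].

Lemma glue_metric {X Y} dX dY (theta : X) (tau : Y) :
  metric_space dX -> metric_space dY -> metric_space (glue_dist dX dY theta tau).
Proof.
  intros Hx Hy.
  pose proof (ms_pos dX Hx) as PX. pose proof (ms_pos dY Hy) as PY.
  pose proof (ms_sym dX Hx) as SX. pose proof (ms_sym dY Hy) as SY.
  pose proof (ms_tri dX Hx) as TX. pose proof (ms_tri dY Hy) as TY.
  split; [|split; [|split]].
  - intros z w; gdec theta z; gdec theta w; grw Hx Hy; auto;
      pose proof (PX x theta); pose proof (PY tau y); try pose proof (PX x0 theta);
      try pose proof (PY tau y0); lra.
  - intros z w; split.
    + gdec theta z; gdec theta w; grw Hx Hy; intro E.
      * f_equal; apply (ms_eq0 dX Hx); auto.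
      * exfalso. pose proof (PX x theta); pose proof (dY_pos dY tau y Hy Hn); lra.
      * exfalso. pose proof (PX x theta); pose proof (dY_pos dY tau y Hy Hn); lra.
      * f_equal; apply (ms_eq0 dY Hy); auto.
    + intros <-. gdec theta z; grw Hx Hy; [apply (ms_refl dX Hx)|apply (ms_refl dY Hy)].
  - intros z w; gdec theta z; gdec theta w; grw Hx Hy; auto.
  - intros z w u; gdec theta z; gdec theta w; gdec theta u; grw Hx Hy.
    + apply TX.
    + pose proof (TX x x0 theta); lra.
    + pose proof (TX x theta x0); pose proof (SX theta x0); pose proof (PY tau y); lra.
    + pose proof (TY tau y y0); lra.
    + pose proof (TX x0 x theta); pose proof (SX x0 x); lra.
    + pose proof (TY y tau y0); pose proof (SY y tau); pose proof (PX x theta); lra.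
    + pose proof (TY tau y0 y); pose proof (SY y0 y); lra.
    + apply TY.
Qed.

Lemma geo_emb_X {X Y} dX dY (theta : X) (tau : Y) g x1 x2 :
  geodesic dX g x1 x2 ->
  geodesic (glue_dist dX dY theta tau) (fun t => embX tau (g t)) (embX tau x1) (embX tau x2).
Proof.
  intros [H0 [H1 H2]]. unfold geodesic; cbv beta. rewrite dXX.
  split; [|split]; [rewrite H0; auto|rewrite H1; auto|].
  intros s t Hs Ht. rewrite dXX. auto.
Qed.

Lemma geo_emb_Y {X Y} dX dY (theta : X) (tau : Y) g y1 y2 :
  metric_space dX -> metric_space dY -> geodesic dY g y1 y2 ->
  geodesic (glue_dist dX dY theta tau) (fun t => embY theta tau (g t))
    (embY theta tau y1) (embY theta tau y2).
Proof.
  intros Hx Hy [H0 [H1 H2]]. unfold geodesic; cbv beta. rewrite (dYY _ _ _ _ _ _ Hx Hy).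
  split; [|split]; [rewrite H0; auto|rewrite H1; auto|].
  intros s t Hs Ht. rewrite (dYY _ _ _ _ _ _ Hx Hy). auto.
Qed.

Lemma geo_emb_XY {X Y} dX dY (theta : X) (tau : Y) gx gy x y :
  metric_space dX -> metric_space dY -> geodesic dX gx x theta -> geodesic dY gy tau y ->
  geodesic (glue_dist dX dY theta tau)
    (fun t => if Rle_dec t (dX x theta) then embX tau (gx t)
              else embY theta tau (gy (t - dX x theta)))
    (embX tau x) (embY theta tau y).
Proof.
  intros Hx Hy [A0 [A1 A2]] [B0 [B1 B2]]. unfold geodesic; cbv beta.
  rewrite (dXY _ _ _ _ _ _ Hy).
  set (p := dX x theta) in *. set (q := dY tau y) in *.
  assert (Hp : 0 <= p) by apply (ms_pos dX Hx).
  assert (Hq : 0 <= q) by apply (ms_pos dY Hy).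
  split; [|split].
  - destruct Rle_dec; [rewrite A0; auto|lra].
  - destruct Rle_dec.
    + assert (q = 0) by lra. assert (E : tau = y) by (apply (ms_eq0 dY Hy); auto).
      replace (p + q) with p by lra. rewrite A1. subst q. rewrite <- E. rewrite embY_tau; auto.
    + replace (p + q - p) with q by ring. rewrite B1; auto.
  - intros s t Hs Ht.
    destruct (Rle_dec s p); destruct (Rle_dec t p).
    + rewrite dXX. apply A2; lra.
    + rewrite (dXY _ _ _ _ _ _ Hy).
      assert (E1 : dX (gx s) theta = p - s).
      { rewrite <- A1. rewrite A2 by lra. rewrite Rabs_minus_sym; apply Rabs_right; lra. }
      assert (E2 : dY tau (gy (t - p)) = t - p).
      { rewrite <- B0 at 1. rewrite B2 by lra. rewrite Rabs_minus_sym, Rminus_0_r; apply Rabs_right; lra. }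
      rewrite E1, E2. rewrite Rabs_minus_sym; rewrite Rabs_right; lra.
    + rewrite (dYX _ _ _ _ _ _ Hx Hy).
      assert (E1 : dX (gx t) theta = p - t).
      { rewrite <- A1. rewrite A2 by lra. rewrite Rabs_minus_sym; apply Rabs_right; lra. }
      assert (E2 : dY tau (gy (s - p)) = s - p).
      { rewrite <- B0 at 1. rewrite B2 by lra. rewrite Rabs_minus_sym, Rminus_0_r; apply Rabs_right; lra. }
      rewrite E1, E2. rewrite Rabs_right; lra.
    + rewrite (dYY _ _ _ _ _ _ Hx Hy). rewrite B2 by lra. f_equal; ring.
Qed.

Lemma glue_geodesic_space {X Y} dX dY (theta : X) (tau : Y) :
  geodesic_space dX -> geodesic_space dY -> geodesic_space (glue_dist dX dY theta tau).
Proof.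
  intros [Hx GX] [Hy GY]. pose proof (glue_metric dX dY theta tau Hx Hy) as Hm.
  split; [exact Hm|]. intros z w.
  assert (HXY : forall x y, exists gam, geodesic (glue_dist dX dY theta tau) gam
                  (embX tau x) (embY theta tau y)).
  { intros x y. destruct (GX x theta) as [gx Hgx]. destruct (GY tau y) as [gy Hgy].
    eexists; apply (geo_emb_XY _ _ _ _ _ _ _ _ Hx Hy Hgx Hgy). }
  gdec theta z; gdec theta w.
  - destruct (GX x x0) as [g Hg]. eexists; apply geo_emb_X; eauto.
  - apply HXY.
  - destruct (HXY x y) as [g Hg]. eexists; apply (geo_rev _ _ _ _ Hm Hg).
  - destruct (GY y y0) as [g Hg]. eexists; apply geo_emb_Y; eauto.
Qed.

Lemma geo_dists {T} (d : T -> T -> R) g x y t :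
  geodesic d g x y -> 0 <= t <= d x y -> d x (g t) = t /\ d (g t) y = d x y - t.
Proof.
  intros [H0 [H1 H2]] Ht. split.
  - rewrite <- H0 at 1. rewrite H2 by lra. rewrite Rabs_minus_sym, Rminus_0_r; apply Rabs_right; lra.
  - rewrite <- H1 at 1. rewrite H2 by lra. rewrite Rabs_minus_sym; apply Rabs_right; lra.
Qed.

Lemma d_pos {T} (d : T -> T -> R) a b : metric_space d -> a <> b -> 0 < d a b.
Proof.
  intros Hm H. pose proof (ms_pos d Hm a b). destruct (Rle_lt_or_eq_dec _ _ H0); auto.
  exfalso; apply H; apply (ms_eq0 d Hm); auto.
Qed.

Lemma stayX {X Y} dX dY (theta : X) (tau : Y) gam x1 x2 t :
  metric_space dX -> metric_space dY ->
  geodesic (glue_dist dX dY theta tau) gam (embX tau x1) (embX tau x2) ->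
  0 <= t <= dX x1 x2 -> gam t = embX tau (pX theta tau (gam t)).
Proof.
  intros Hx Hy Hg Ht.
  destruct (glue_dec theta tau (gam t)) as [[x' E]|[y' [Hn E]]].
  - rewrite E; reflexivity.
  - exfalso.
    destruct (geo_dists _ _ _ _ t Hg) as [E1 E2]; [rewrite dXX; auto|].
    rewrite dXX, E in *. rewrite (dXY _ _ _ _ _ _ Hy) in E1. rewrite (dYX _ _ _ _ _ _ Hx Hy) in E2.
    pose proof (dY_pos dY tau y' Hy Hn). pose proof (ms_tri dX Hx x1 theta x2).
    pose proof (ms_sym dX Hx theta x2). lra.
Qed.

Lemma stayY {X Y} dX dY (theta : X) (tau : Y) gam y1 y2 t :
  metric_space dX -> metric_space dY ->
  geodesic (glue_dist dX dY theta tau) gam (embY theta tau y1) (embY theta tau y2) ->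
  0 <= t <= dY y1 y2 -> gam t = embY theta tau (pY tau (gam t)).
Proof.
  intros Hx Hy Hg Ht.
  destruct (glue_dec theta tau (gam t)) as [[x' E]|[y' [Hn E]]].
  - destruct (classic (x' = theta)) as [->|Hn].
    + rewrite E. change (pY tau (embX tau theta)) with tau. rewrite embY_tau; auto.
    + exfalso.
      destruct (geo_dists _ _ _ _ t Hg) as [E1 E2]; [rewrite (dYY _ _ _ _ _ _ Hx Hy); auto|].
      rewrite (dYY _ _ _ _ _ _ Hx Hy), E in *.
      rewrite (dYX _ _ _ _ _ _ Hx Hy) in E1. rewrite (dXY _ _ _ _ _ _ Hy) in E2.
      pose proof (d_pos dX x' theta Hx Hn). pose proof (ms_tri dY Hy y1 tau y2).
      pose proof (ms_sym dY Hy y1 tau). lra.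
  - rewrite E, pY_embY; reflexivity.
Qed.

Lemma mixX {X Y} dX dY (theta : X) (tau : Y) gam x1 y2 t :
  metric_space dX -> metric_space dY ->
  geodesic (glue_dist dX dY theta tau) gam (embX tau x1) (embY theta tau y2) ->
  0 <= t <= dX x1 theta -> gam t = embX tau (pX theta tau (gam t)).
Proof.
  intros Hx Hy Hg Ht.
  destruct (glue_dec theta tau (gam t)) as [[x' E]|[y' [Hn E]]].
  - rewrite E; reflexivity.
  - exfalso.
    pose proof (ms_pos dY Hy tau y2).
    destruct (geo_dists _ _ _ _ t Hg) as [E1 E2]; [rewrite (dXY _ _ _ _ _ _ Hy); lra|].
    rewrite E in E1. rewrite (dXY _ _ _ _ _ _ Hy) in E1.
    pose proof (dY_pos dY tau y' Hy Hn). lra.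
Qed.

Lemma mixY {X Y} dX dY (theta : X) (tau : Y) gam x1 y2 t :
  metric_space dX -> metric_space dY ->
  geodesic (glue_dist dX dY theta tau) gam (embX tau x1) (embY theta tau y2) ->
  dX x1 theta <= t <= dX x1 theta + dY tau y2 -> gam t = embY theta tau (pY tau (gam t)).
Proof.
  intros Hx Hy Hg Ht.
  destruct (glue_dec theta tau (gam t)) as [[x' E]|[y' [Hn E]]].
  -
    pose proof (ms_pos dX Hx x1 theta).
    destruct (geo_dists _ _ _ _ t Hg) as [E1 E2]; [rewrite (dXY _ _ _ _ _ _ Hy); lra|].
    rewrite E in E2. rewrite (dXY _ _ _ _ _ _ Hy) in E2. rewrite (dXY _ _ _ _ _ _ Hy) in E2.
    pose proof (ms_pos dX Hx x' theta).
    assert (x' = theta) by (apply (ms_eq0 dX Hx); lra). subst x'.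
    rewrite E. change (pY tau (embX tau theta)) with tau. rewrite embY_tau; auto.
  - rewrite E, pY_embY; reflexivity.
Qed.

Lemma mainX_mix {X Y} dX dY (etaX : X -> R -> R -> R) (theta : X) (tau : Y) eta
  xa r eps x1 y2 gam :
  metric_space dX -> metric_space dY -> modulus_wuc dX etaX ->
  0 < r -> 0 < eps <= 2 -> y2 <> tau ->
  eta <= eps / 4 -> eta <= etaX xa r (eps / 4) ->
  geodesic (glue_dist dX dY theta tau) gam (embX tau x1) (embY theta tau y2) ->
  dX xa x1 <= r -> dX xa theta + dY tau y2 <= r ->
  eps * r <= dX x1 theta + dY tau y2 ->
  glue_dist dX dY theta tau (embX tau xa) (gam ((dX x1 theta + dY tau y2) / 2)) <= (1 - eta) * r.
Proof.
  intros Hx Hy MX Hr He Hn Ee1 Ee2 Hg Hr1 Hr2 HD.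
  pose proof (dY_pos dY tau y2 Hy Hn) as Hq.
  pose proof (ms_pos dX Hx x1 theta) as Hp.
  pose proof (ms_pos dX Hx xa theta) as Hat.
  set (p := dX x1 theta) in *. set (q := dY tau y2) in *.
  destruct (Rle_dec p q) as [Hpq|Hpq].
  -
    assert (Hm : p <= (p + q) / 2 <= p + q) by lra.
    pose proof (mixY _ _ _ _ _ _ _ _ Hx Hy Hg Hm) as E.
    destruct (geo_dists _ _ _ _ ((p + q) / 2) Hg) as [E1 _];
      [rewrite (dXY _ _ _ _ _ _ Hy); fold p q; lra|].
    rewrite E in E1 |- *. rewrite (dXY _ _ _ _ _ _ Hy) in E1. rewrite (dXY _ _ _ _ _ _ Hy). fold p in E1.
    assert (eta * r <= eps / 4 * r) by (apply Rmult_le_compat_r; lra).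
    nra.
  - apply Rnot_le_lt in Hpq.
    pose proof (fun t Ht => mixX _ _ _ _ _ _ _ t Hx Hy Hg Ht) as EX. fold p in EX.
    set (gX := fun t => pX theta tau (gam t)).
    assert (HgX : geodesic dX gX x1 theta).
    { destruct Hg as [G0 [G1 G2]]. split; [|split].
      - unfold gX; rewrite G0; reflexivity.
      - fold p. destruct (glue_dec theta tau (gam p)) as [[x' E]|[y' [Hn' E]]].
        + destruct (geo_dists _ _ _ _ p (conj G0 (conj G1 G2))) as [_ E2];
            [rewrite (dXY _ _ _ _ _ _ Hy); fold p q; lra|].
          rewrite E in E2. rewrite !(dXY _ _ _ _ _ _ Hy) in E2. fold p q in E2.
          pose proof (ms_pos dX Hx x' theta).
          assert (x' = theta) by (apply (ms_eq0 dX Hx); lra).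
          unfold gX; rewrite E; subst; reflexivity.
        + exfalso. pose proof (EX p (conj Hp (Rle_refl p))) as E'. rewrite E in E'. unfold embY in E'; destruct excluded_middle_informative; [contradiction|]. apply (f_equal (@proj1_sig _ _)) in E'. discriminate E'.
      - fold p. intros s t Hs Ht. unfold gX.
        rewrite <- dXX with (dY := dY) (theta := theta) (tau := tau).
        rewrite <- (EX s Hs), <- (EX t Ht). apply G2; rewrite (dXY _ _ _ _ _ _ Hy); fold p q; lra. }
    assert (Hmid : gam ((p + q) / 2) = embX tau (gX ((p + q) / 2))) by (apply EX; lra).
    rewrite Hmid, dXX.
    destruct MX as [MXp MXm].
    assert (He4 : 0 < eps / 4 <= 2) by lra.
    assert (Hxt : dX xa theta <= r) by lra.
    pose proof (MXp xa r (eps/4) Hr He4) as Hpos.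
    destruct (Rle_dec (eps * r / 4) q) as [Hqb|Hqb].
    + (* use m0 = gX (p/2) and ball convexity on [p/2, p] *)
      pose proof (MXm xa r (eps/4) x1 theta gX Hr He4 HgX Hr1 Hxt) as K.
      fold p in K. specialize (K ltac:(lra)).
      destruct (geo_sub dX gX x1 theta (p/2) p HgX) as [Ed Hg']; fold p; try lra.
      assert (B1 : dX xa (gX (p / 2)) <= (1 - eta) * r).
      { eapply Rle_trans; [exact K|]. nra. }
      assert (B2 : dX xa (gX p) <= (1 - eta) * r).
      { destruct HgX as [_ [G1 _]]. fold p in G1. rewrite G1.
        assert (eta * r <= eps / 4 * r) by (apply Rmult_le_compat_r; lra). nra. }
      pose proof (ball_convex dX etaX _ _ _ xa ((1 - eta) * r) Hx (conj MXp MXm) Hg' B1 B2 (q / 2))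
        as BC.
      rewrite Ed in BC. specialize (BC ltac:(lra)).
      replace ((p + q) / 2) with (p / 2 + q / 2) by field. exact BC.
    + apply Rnot_le_lt in Hqb.
      assert (Bw : dX xa (gX q) <= r).
      { destruct HgX as [G0 [G1 G2]].
        apply (ball_convex dX etaX gX x1 theta xa r Hx (conj MXp MXm) (conj G0 (conj G1 G2)));
          try (rewrite G1; exact Hxt); try (rewrite G0; exact Hr1); auto.
        fold p; lra. }
      destruct (geo_sub dX gX x1 theta q p HgX) as [Ed Hg']; fold p; try lra.
      assert (Bt : dX xa (gX p) <= r).
      { destruct HgX as [_ [G1 _]]. fold p in G1. rewrite G1. exact Hxt. }
      pose proof (MXm xa r (eps/4) _ _ _ Hr He4 Hg' Bw Bt) as K.
      rewrite Ed in K. specialize (K ltac:(lra)).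
      replace (q + (p - q) / 2) with ((p + q) / 2) in K by field.
      eapply Rle_trans; [exact K|]. nra.
Qed.

Lemma mainX {X Y} dX dY (etaX : X -> R -> R -> R) (etaY : Y -> R -> R -> R) (theta : X) (tau : Y)
  xa r eps x y gam :
  metric_space dX -> metric_space dY -> modulus_wuc dX etaX ->
  modulus_wuc dY etaY -> monotone_modulus etaY ->
  0 < r -> 0 < eps <= 2 ->
  geodesic (glue_dist dX dY theta tau) gam x y ->
  glue_dist dX dY theta tau (embX tau xa) x <= r ->
  glue_dist dX dY theta tau (embX tau xa) y <= r ->
  eps * r <= glue_dist dX dY theta tau x y ->
  glue_dist dX dY theta tau (embX tau xa) (gam (glue_dist dX dY theta tau x y / 2)) <=
  (1 - Rmin (Rmin (etaX xa r eps) (etaY tau r eps * eps / 2))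
            (Rmin (eps / 4) (etaX xa r (eps / 4)))) * r.
Proof.
  intros Hx Hy MX MY MonY Hr He Hg Hrx Hry HD.
  set (eta := Rmin (Rmin (etaX xa r eps) (etaY tau r eps * eps / 2))
            (Rmin (eps / 4) (etaX xa r (eps / 4)))).
  assert (Q1 : eta <= etaX xa r eps) by
    (unfold eta; eapply Rle_trans; [apply Rmin_l|apply Rmin_l]).
  assert (Q2 : eta <= etaY tau r eps * eps / 2) by
    (unfold eta; eapply Rle_trans; [apply Rmin_l|apply Rmin_r]).
  assert (Q3 : eta <= eps / 4) by
    (unfold eta; eapply Rle_trans; [apply Rmin_r|apply Rmin_l]).
  assert (Q4 : eta <= etaX xa r (eps / 4)) by
    (unfold eta; eapply Rle_trans; [apply Rmin_r|apply Rmin_r]).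
  clearbody eta.
  pose proof (glue_metric dX dY theta tau Hx Hy) as Hm.
  destruct (glue_dec theta tau x) as [[x1 ->]|[y1 [Hn1 ->]]];
  destruct (glue_dec theta tau y) as [[x2 ->]|[y2 [Hn2 ->]]].
  -
    rewrite dXX in *.
    pose proof (ms_pos dX Hx x1 x2).
    pose proof (fun t Ht => stayX _ _ _ _ _ _ _ t Hx Hy Hg Ht) as EX.
    set (gX := fun t => pX theta tau (gam t)).
    assert (HgX : geodesic dX gX x1 x2).
    { destruct Hg as [G0 [G1 G2]]. rewrite dXX in G1, G2. split; [|split].
      - unfold gX; rewrite G0; reflexivity.
      - unfold gX; rewrite G1; reflexivity.
      - intros s t Hs Ht. unfold gX.
        rewrite <- dXX with (dY := dY) (theta := theta) (tau := tau).
        rewrite <- (EX s Hs), <- (EX t Ht). apply G2; auto. }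
    rewrite (EX (dX x1 x2 / 2)) by lra. rewrite dXX.
    destruct MX as [MXp MXm].
    pose proof (MXm xa r eps x1 x2 gX Hr He HgX Hrx Hry HD) as K.
    pose proof (MXp xa r eps Hr He).
    eapply Rle_trans; [exact K|]. unfold gX. nra.
  -
    rewrite (dXY _ _ _ _ _ _ Hy) in *.
    apply (mainX_mix dX dY etaX theta tau eta xa r eps x1 y2 gam Hx Hy MX Hr He Hn2 Q3 Q4 Hg);
      first [exact Hrx | exact HD | (rewrite (dXY _ _ _ _ _ _ Hy) in Hry; exact Hry)].
  -
    rewrite (dYX _ _ _ _ _ _ Hx Hy) in *.
    pose proof (geo_rev _ _ _ _ Hm Hg) as Hg'.
    rewrite (dYX _ _ _ _ _ _ Hx Hy) in Hg'.
    pose proof (ms_pos dX Hx x2 theta). pose proof (ms_pos dY Hy tau y1).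
    pose proof (mainX_mix dX dY etaX theta tau eta xa r eps x2 y1 _ Hx Hy MX Hr He Hn1 Q3 Q4 Hg')
      as K.
    rewrite dXX in Hry. rewrite (dXY _ _ _ _ _ _ Hy) in Hrx.
    specialize (K Hry Hrx HD). cbv beta in K.
    replace (dX x2 theta + dY tau y1 - (dX x2 theta + dY tau y1) / 2)
      with ((dX x2 theta + dY tau y1) / 2) in K by field.
    exact K.
  -
    rewrite (dYY _ _ _ _ _ _ Hx Hy) in *.
    rewrite (dXY _ _ _ _ _ _ Hy) in Hrx. rewrite (dXY _ _ _ _ _ _ Hy) in Hry.
    pose proof (ms_pos dY Hy y1 y2).
    pose proof (fun t Ht => stayY _ _ _ _ _ _ _ t Hx Hy Hg Ht) as EY.
    set (gY := fun t => pY tau (gam t)).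
    assert (HgY : geodesic dY gY y1 y2).
    { destruct Hg as [G0 [G1 G2]]. rewrite (dYY _ _ _ _ _ _ Hx Hy) in G1, G2. split; [|split].
      - unfold gY; rewrite G0; apply pY_embY.
      - unfold gY; rewrite G1; apply pY_embY.
      - intros s t Hs Ht. unfold gY.
        rewrite <- (dYY dX dY theta tau _ _ Hx Hy).
        rewrite <- (EY s Hs), <- (EY t Ht). apply G2; auto. }
    rewrite (EY (dY y1 y2 / 2)) by lra. rewrite (dXY _ _ _ _ _ _ Hy).
    pose proof (ms_pos dX Hx xa theta).
    pose proof (dY_pos dY tau y1 Hy Hn1).
    set (rho := r - dX xa theta).
    assert (Hrho : 0 < rho) by (unfold rho; lra).
    assert (Hrr : rho <= r) by (unfold rho; lra).
    pose proof (ms_tri dY Hy y1 tau y2). pose proof (ms_sym dY Hy y1 tau).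
    destruct MY as [MYp MYm].
    assert (Hd1 : dY tau y1 <= rho) by (unfold rho; lra).
    assert (Hd2 : dY tau y2 <= rho) by (unfold rho; lra).
    assert (HD' : eps * rho <= dY y1 y2).
    { assert (eps * rho <= eps * r) by (apply Rmult_le_compat_l; lra). lra. }
    pose proof (MYm tau rho eps y1 y2 gY Hrho He HgY Hd1 Hd2 HD') as K.
    pose proof (MonY tau rho r eps Hrho Hrr He) as Mo.
    pose proof (MYp tau r eps Hr He).
    set (e := etaY tau r eps) in *. set (e' := etaY tau rho eps) in *.
    assert (e * rho <= e' * rho) by (apply Rmult_le_compat_r; lra).
    assert (e * (eps * r / 2) <= e * rho) by (apply Rmult_le_compat_l; lra).
    assert (eta * r <= e * eps / 2 * r) by (apply Rmult_le_compat_r; lra).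
    unfold gY in K. unfold rho in *. nra.
Qed.

Definition swp {X Y} (theta : X) (tau : Y) (z : glue X Y tau) : glue Y X theta :=
  match proj1_sig z with inl x => embY tau theta x | inr y => embX theta y end.

Lemma swp_X {X Y} (theta : X) (tau : Y) x : swp theta tau (embX tau x) = embY tau theta x.
Proof. reflexivity. Qed.
Lemma swp_Y {X Y} (theta : X) (tau : Y) y : swp theta tau (embY theta tau y) = embX theta y.
Proof.
  unfold embY at 1; destruct excluded_middle_informative.
  - subst. rewrite swp_X. apply embY_tau.
  - reflexivity.
Qed.

Lemma swp_dist {X Y} dX dY (theta : X) (tau : Y) z w :
  metric_space dX -> metric_space dY ->
  glue_dist dY dX tau theta (swp theta tau z) (swp theta tau w) = glue_dist dX dY theta tau z w.
Proof.
  intros Hx Hy.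
  destruct (glue_dec theta tau z) as [[x ->]|[y [Hn ->]]];
  destruct (glue_dec theta tau w) as [[x' ->]|[y' [Hn' ->]]];
  rewrite ?swp_X, ?swp_Y.
  - rewrite (dYY _ _ _ _ _ _ Hy Hx). reflexivity.
  - rewrite (dYX _ _ _ _ _ _ Hy Hx), (dXY _ _ _ _ _ _ Hy).
    rewrite (ms_sym dY Hy), (ms_sym dX Hx). ring.
  - rewrite (dXY _ _ _ _ _ _ Hx), (dYX _ _ _ _ _ _ Hx Hy).
    rewrite (ms_sym dY Hy), (ms_sym dX Hx). ring.
  - rewrite dXX, (dYY _ _ _ _ _ _ Hx Hy). reflexivity.
Qed.

Lemma glue_eta_X {X Y} etaX etaY (theta : X) (tau : Y) xa r eps :
  glue_eta etaX etaY theta tau (embX tau xa) r eps =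
  Rmin (Rmin (etaX xa r eps) (etaY tau r eps * eps / 2)) (Rmin (eps / 4) (etaX xa r (eps / 4))).
Proof. reflexivity. Qed.
Lemma glue_eta_Y {X Y} etaX etaY (theta : X) (tau : Y) ya r eps :
  ya <> tau ->
  glue_eta etaX etaY theta tau (embY theta tau ya) r eps =
  Rmin (Rmin (etaY ya r eps) (etaX theta r eps * eps / 2)) (Rmin (eps / 4) (etaY ya r (eps / 4))).
Proof. intros H. unfold embY; destruct excluded_middle_informative; [contradiction|reflexivity]. Qed.

Lemma min4_pos a b c e : 0 < a <= 1 -> 0 < b -> 0 < c -> 0 < e ->
  0 < Rmin (Rmin a b) (Rmin c e) <= 1.
Proof.
  intros. split.
  - repeat apply Rmin_glb_lt; lra.
  - eapply Rle_trans; [apply Rmin_l|]. eapply Rle_trans; [apply Rmin_l|]. lra.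
Qed.

Theorem lemma2p2 (X Y : Type) (dX : X -> X -> R) (dY : Y -> Y -> R)
  (etaX : X -> R -> R -> R) (etaY : Y -> R -> R -> R) (theta : X) (tau : Y) :
  geodesic_space dX -> geodesic_space dY ->
  modulus_wuc dX etaX -> monotone_modulus etaX ->
  modulus_wuc dY etaY -> monotone_modulus etaY ->
  geodesic_space (glue_dist dX dY theta tau) /\
  modulus_wuc (glue_dist dX dY theta tau) (glue_eta etaX etaY theta tau).
Proof.
  intros GX GY MX MonX MY MonY.
  pose proof (proj1 GX) as Hx. pose proof (proj1 GY) as Hy.
  split; [apply glue_geodesic_space; auto|].
  split.
  - intros a r eps Hr He.
    assert (He4 : 0 < eps / 4 <= 2) by lra.
    destruct (glue_dec theta tau a) as [[xa ->]|[ya [Hn ->]]].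
    + rewrite glue_eta_X. apply min4_pos.
      * apply (mod_pos dX etaX xa r eps MX Hr He).
      * pose proof (mod_pos dY etaY tau r eps MY Hr He). nra.
      * lra.
      * apply (mod_pos dX etaX xa r (eps/4) MX Hr He4).
    + rewrite (glue_eta_Y _ _ _ _ _ _ _ Hn). apply min4_pos.
      * apply (mod_pos dY etaY ya r eps MY Hr He).
      * pose proof (mod_pos dX etaX theta r eps MX Hr He). nra.
      * lra.
      * apply (mod_pos dY etaY ya r (eps/4) MY Hr He4).
  - intros a r eps x y gam Hr He Hg Hax Hay HD.
    destruct (glue_dec theta tau a) as [[xa ->]|[ya [Hn ->]]].
    + rewrite glue_eta_X. apply mainX; auto.
    + rewrite (glue_eta_Y _ _ _ _ _ _ _ Hn).
      pose proof (glue_metric dX dY theta tau Hx Hy) as Hm.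
      set (gam' := fun t => swp theta tau (gam t)).
      assert (Hg' : geodesic (glue_dist dY dX tau theta) gam' (swp theta tau x) (swp theta tau y)).
      { destruct Hg as [G0 [G1 G2]]. unfold geodesic, gam'.
        rewrite (swp_dist dX dY theta tau x y Hx Hy). split; [|split].
        - rewrite G0; reflexivity.
        - rewrite G1; reflexivity.
        - intros s t Hs Ht. rewrite (swp_dist dX dY theta tau _ _ Hx Hy). auto. }
      pose proof (mainX dY dX etaY etaX tau theta ya r eps _ _ gam' Hy Hx MY MX MonX Hr He Hg')
        as K.
      rewrite <- (swp_Y theta tau ya) in K. unfold gam' in K.
      rewrite !(swp_dist dX dY theta tau _ _ Hx Hy) in K.
      apply K; auto.
Qed.
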